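(* Let $p$ be an odd prime and $G$ the non-abelian group of order $p^3$ and exponent $p$. Let $W$ be a sequence over $G$ of length $p^3+3p-3$. Then: (i) $W$ has a subsequence of length $p^3$ with central product; (ii) if at least $p^3+p-1$ terms of $W$ (counted with multiplicity) lie in $Z(G)$, then $W$ has a product-one subsequence of length $p^3$; (iii) if at least $p^3+2p-2$ terms of $W$ (counted with multiplicity) lie in some maximal subgroup of $G$, then $W$ has a product-one subsequence of length $p^3$.
   Context: $G = \langle x, y : x^p = y^p = 1,\ [y,x] \text{ central}\rangle$ is the Heisenberg group of order $p^3$ and exponent $p$, with $Z(G)=[G,G]$ of order $p$. A sequence over $G$ is a finite unordered list (multiset) of elements of $G$; a subsequence is a sub-multiset. A sequence $g_1\cdot\dotsc\cdot g_\ell$ has central product if $g_1\cdots g_\ell\in Z(G)$ (independent of ordering). A non-empty sequence is product-one if some ordering of its terms has product $1$. *)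

(* Defs.v *)
From mathcomp Require Import all_boot all_fingroup all_solvable.
Set Implicit Arguments. Unset Strict Implicit. Unset Printing Implicit Defensive.
Local Open Scope group_scope.

(* Sequences over a group are represented as [seq gT] (order irrelevant).
   [msub S W]: S is a sub-multiset of W. *)
Definition msub (gT : eqType) (S W : seq gT) : Prop :=
  exists T : seq gT, subseq T W /\ perm_eq S T.

Definition seqprod (gT : finGroupType) (S : seq gT) : gT := \prod_(x <- S) x.

(* S has central product in G (order independent) *)
Definition has_central_product (gT : finGroupType) (G : {set gT}) (S : seq gT) : Prop :=
  seqprod S \in 'Z(G).

Definition product_one (gT : finGroupType) (S : seq gT) : Prop :=
  S <> [::] /\ exists T : seq gT, perm_eq T S /\ seqprod T = 1.

(* Main.v *)
From Pilot Require Import Defs.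
From HB Require Import structures.
From mathcomp Require Import all_boot all_order all_algebra all_fingroup all_solvable zify.
Set Implicit Arguments. Unset Strict Implicit. Unset Printing Implicit Defensive.
Import GRing.Theory.

Section PA.
Local Open Scope ring_scope.

Section GAlg.
Variables (F : comNzRingType) (V : finZmodType).
Definition galg := {ffun V -> F}.
HB.instance Definition _ := GRing.Zmodule.on galg.

Definition gmul (f g : galg) : galg := [ffun h => \sum_a f a * g (h - a)].
Definition gone : galg := [ffun h => (h == 0)%:R].

Lemma gmulC : commutative gmul.
Proof.
move=> f g; apply/ffunP=> h; rewrite !ffunE.
rewrite (reindex_inj (inv_inj (fun a => subKr h a))) /=.
by apply: eq_bigr => a _; rewrite subKr mulrC.
Qed.

Lemma gmul1 : left_id gone gmul.
Proof.
move=> g; apply/ffunP=> h; rewrite ffunE (bigD1 0) //= big1 ?addr0.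
  by rewrite ffunE eqxx mul1r subr0.
by move=> a /negPf na; rewrite ffunE na mul0r.
Qed.

Lemma gmulDl : left_distributive gmul +%R.
Proof.
move=> f g k; apply/ffunP=> h; rewrite !ffunE -big_split /=.
by apply: eq_bigr => a _; rewrite ffunE mulrDl.
Qed.

Lemma gmulA : associative gmul.
Proof.
move=> f g k; apply/ffunP=> h; rewrite !ffunE.
transitivity (\sum_b \sum_c f b * (g c * k (h - b - c))).
  by apply: eq_bigr => b _; rewrite ffunE big_distrr.
transitivity (\sum_b \sum_a f b * g (a - b) * k (h - a)); last first.
  rewrite exchange_big /=; apply: eq_bigr => a _; rewrite ffunE big_distrl /=.
  by apply: eq_bigr.
apply: eq_bigr => b _; rewrite [RHS](reindex_inj (addrI b)) /=.
apply: eq_bigr => c _; rewrite mulrA [b + c]addrC addrK; congr (_ * k _).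
by rewrite opprD addrA addrAC.
Qed.

Lemma gone_neq0 : gone != 0.
Proof.
apply/eqP => /ffunP/(_ 0); rewrite !ffunE eqxx /= => /eqP; by rewrite oner_eq0.
Qed.

HB.instance Definition _ := GRing.Zmodule_isComNzRing.Build galg gmulA gmulC gmul1 gmulDl gone_neq0.

Definition dlt (g : V) : galg := [ffun h => (h == g)%:R].

Lemma dlt0 : dlt 0 = 1. Proof. by []. Qed.

Lemma dltD a b : dlt a * dlt b = dlt (a + b).
Proof.
apply/ffunP=> h; rewrite /GRing.mul /= /gmul !ffunE (bigD1 a) //= big1 ?addr0.
  rewrite !ffunE eqxx mul1r (_ : (h - a == b) = (h == a + b)) //.
  apply/eqP/eqP => [<-|->]; first by rewrite addrCA subrr addr0.
  by rewrite [a + b]addrC addrK.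
by move=> c /negPf nc; rewrite ffunE nc mul0r.
Qed.

Lemma dltX a n : dlt a ^+ n = dlt (a *+ n).
Proof. by elim: n => [|n IH]; rewrite ?expr0 ?mulr0n // exprS IH dltD mulrS. Qed.

Lemma dlt_eval a h : dlt a h = (h == a)%:R.
Proof. by rewrite ffunE. Qed.

Lemma galg_natr n : (n%:R : galg) = [ffun h => (h == 0)%:R *+ n].
Proof.
elim: n => [|n IH]; apply/ffunP => h; rewrite !ffunE ?mulr0n //.
by rewrite mulrS /GRing.add /= !ffunE IH ffunE mulrS.
Qed.

End GAlg.

End PA.

Section PB.
Local Open Scope ring_scope.

Lemma ideal_prod (R : comNzRingType) k (u : 'I_k -> R) (n : 'I_k -> nat) N
    (c : 'I_N -> 'I_k -> R) :
  (forall j, u j ^+ n j = 0) -> (\sum_j (n j).-1 < N)%N ->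
  \prod_i \sum_j u j * c i j = 0.
Proof.
move=> un hN; rewrite bigA_distr_bigA big1 // => f _.
rewrite big_split /=.
suff ->: \prod_i u (f i) = 0 by rewrite mul0r.
rewrite (partition_big f predT) //=.
case: (boolP [exists j, (n j <= #|[pred i | f i == j]|)%N]) => [/existsP [j hj]|/existsPn hall]; last first.
  move: hN; rewrite ltnNge => /negP; case.
  rewrite -{1}[N]card_ord -sum1_card (partition_big f predT) //=.
  apply: leq_sum => j _; rewrite sum1_card.
  by have := hall j; rewrite -ltnNge; case: (n j).
rewrite (bigD1 j) //=.
rewrite (eq_bigr (fun _ => u j)); last by move=> i /eqP ->.
rewrite (_ : \prod_(i < N | f i == j) u j = \prod_(i in [pred i | f i == j]) u j) //.
by rewrite prodr_const -(subnKC hj) exprD un !mul0r.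
Qed.

Section Olson.
Variables (F : comNzRingType) (V : finZmodType) (k : nat) (e : 'I_k -> V).
Local Notation A := (galg F V).
Definition inspan (x : A) := exists c : 'I_k -> A, x = \sum_j (1 - dlt F (e j)) * c j.

Lemma inspan0 : inspan 0.
Proof. by exists (fun _ => 0); rewrite big1 // => j _; rewrite mulr0. Qed.

Lemma inspanD x y : inspan x -> inspan y -> inspan (x + y).
Proof.
move=> [c ->] [d ->]; exists (fun j => c j + d j).
by rewrite -big_split; apply: eq_bigr => j _; rewrite mulrDr.
Qed.

Lemma inspanM x y : inspan x -> inspan (y * x).
Proof.
move=> [c ->]; exists (fun j => y * c j).
by rewrite big_distrr; apply: eq_bigr => j _; rewrite mulrCA.
Qed.

Lemma inspan_gen j : inspan (1 - dlt F (e j)).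
Proof.
exists (fun i => (i == j)%:R); rewrite (bigD1 j) //= big1 ?addr0 ?eqxx ?mulr1 //.
by move=> i /negPf ->; rewrite mulr0.
Qed.

Lemma inspan_dltD a b : inspan (1 - dlt F a) -> inspan (1 - dlt F b) ->
  inspan (1 - dlt F (a + b)).
Proof.
move=> ha hb; rewrite -dltD (_ : 1 - _ = (1 - dlt F a) + dlt F a * (1 - dlt F b)).
  by apply: inspanD => //; apply: inspanM.
by rewrite mulrBr mulr1 addrA subrK.
Qed.

Lemma inspan_comb (c : 'I_k -> nat) : inspan (1 - dlt F (\sum_j e j *+ c j)).
Proof.
apply: (big_ind (fun v => inspan (1 - dlt F v))).
- by rewrite dlt0 subrr; apply: inspan0.
- exact: inspan_dltD.
move=> j _; elim: (c j) => [|m IH]; first by rewrite mulr0n dlt0 subrr; apply: inspan0.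
by rewrite mulrS; apply: inspan_dltD => //; apply: inspan_gen.
Qed.

End Olson.

Lemma galg_sign_eval (F : comNzRingType) (V : finZmodType) m (x : galg F V) h :
  ((-1) ^+ m * x) h = (-1) ^+ m * x h.
Proof.
elim: m => [|m IH]; first by rewrite !expr0 !mul1r.
by rewrite !exprS -!mulrA !mulN1r ffunE IH.
Qed.

Lemma olson (F : comNzRingType) (V : finZmodType) (p k : nat) (e : 'I_k -> V)
    (t : 'I_k -> nat) N (g : 'I_N -> V) :
  p \in [pchar F] -> (forall j, e j *+ (p ^ t j) = 0) ->
  (forall i, exists c : 'I_k -> nat, g i = \sum_j e j *+ c j) ->
  (\sum_j (p ^ t j).-1 < N)%N ->
  exists2 f : {ffun 'I_N -> bool}, f != [ffun => false] & \sum_(i | f i) g i = 0.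
Proof.
move=> pF he hg hN.
case: (boolP [exists f : {ffun 'I_N -> bool}, (f != [ffun => false]) && (\sum_(i | f i) g i == 0)]).
  by case/existsP => f /andP[f0 /eqP s0]; exists f.
move/existsPn => hno; exfalso.
pose P : galg F V := \prod_i (1 - dlt F (g i)).
have pA : p \in [pchar (galg F V)].
  have pp := pcharf_prime pF.
  rewrite inE pp /= galg_natr; apply/eqP/ffunP => h; rewrite !ffunE.
  by rewrite -mulr_natr (pcharf0 pF) mulr0.
have pnat n : [pchar (galg F V)].-nat (p ^ n)%N.
  by rewrite pnatX (pnatE _ (pcharf_prime pF)) pA.
have P0 : P = 0.
  have /fin_all_exists [c hc] : forall i, exists ci : 'I_k -> galg F V,
      1 - dlt F (g i) = \sum_j (1 - dlt F (e j)) * ci j.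
    move=> i; have [cc ->] := hg i; exact: inspan_comb.
  rewrite /P (eq_bigr _ (fun i _ => hc i)).
  apply: (ideal_prod (n := fun j => (p ^ t j)%N)) => // j.
  by rewrite exprDn_pchar // expr1n exprNn_pchar // dltX he dlt0 subrr.
have P1 : P 0 = 1.
  rewrite /P (eq_bigr (fun i => \sum_(b : bool) (if b then - dlt F (g i) else 1))); last first.
    by move=> i _; rewrite big_bool /= addrC.
  rewrite bigA_distr_bigA sum_ffunE (bigD1 [ffun => false]) //= big1 => [|i _]; last by rewrite ffunE.
  rewrite big1 ?addr0; first by rewrite ffunE eqxx.
  move=> f hf.
  rewrite -big_mkcond /= prodrN -(big_morph (@dlt F V) (fun a b => esym (dltD F a b)) (dlt0 F V)).
  rewrite galg_sign_eval dlt_eval.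
  have := hno f; rewrite hf /= eq_sym => /negPf ->; by rewrite mulr0.
by move: (oner_neq0 F); rewrite -P1 P0 ffunE eqxx.
Qed.

End PB.

Section PD.

Definition V3 (p : nat) := ('Z_p * 'Z_p * 'Z_(p^3))%type.
HB.instance Definition _ p := GRing.Zmodule.on (V3 p).
HB.instance Definition _ p := Finite.on (V3 p).

Local Open Scope ring_scope.

Lemma V3_mulrn p (v : V3 p) n : v *+ n = ((v.1.1 *+ n, v.1.2 *+ n), v.2 *+ n).
Proof. by case: v => [[a b] c]; elim: n => [|n IH]; rewrite ?mulr0n // !mulrS IH. Qed.

Lemma V3_sum p I (r : seq I) (P : pred I) (F : I -> V3 p) :
  \sum_(i <- r | P i) F i =
  ((\sum_(i <- r | P i) (F i).1.1, \sum_(i <- r | P i) (F i).1.2), \sum_(i <- r | P i) (F i).2).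
Proof.
elim: r => [|i r IH]; first by rewrite !big_nil.
by rewrite !big_cons; case: (P i) => //; rewrite IH.
Qed.

Lemma V3_add p (a b a' b' : 'Z_p) (c c' : 'Z_(p ^ 3)) :
  ((a, b), c) + ((a', b'), c') = ((a + a', b + b'), c + c') :> V3 p.
Proof. by []. Qed.

Local Open Scope group_scope.

Lemma prod_xy (T : finGroupType) (x y : T) (I : Type) (r : seq I) (P : pred I)
    (F : I -> T) (a b : I -> nat) :
  commute x y -> (forall i, F i = x ^+ a i * y ^+ b i) ->
  \prod_(i <- r | P i) F i = x ^+ (\sum_(i <- r | P i) a i)%N * y ^+ (\sum_(i <- r | P i) b i)%N.
Proof.
move=> cxy hF; elim: r => [|i r IH]; first by rewrite !big_nil mulg1.
rewrite !big_cons; case: (P i) => //; rewrite IH hF !expgD.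
rewrite !mulgA; congr (_ * _); rewrite -!mulgA; congr (_ * _).
exact: commuteX2 (commute_sym cxy).
Qed.

Lemma app p (T : finGroupType) (x y : T) (usey : bool) (s : seq T) :
  prime p -> commute x y -> x ^+ p = 1 -> y ^+ p = 1 ->
  (forall w, w \in s -> exists ab : nat * nat,
       w = x ^+ ab.1 * y ^+ ab.2 /\ (usey || (ab.2 == 0%N))) ->
  (p ^ 3 + (if usey then 2 * p - 2 else p - 1) <= size s)%N ->
  (size s < 2 * p ^ 3)%N ->
  exists m : bitseq, size (mask m s) = (p ^ 3)%N /\ \prod_(w <- mask m s) w = 1.
Proof.
move=> pp cxy xp yp hs hlo hhi.
have p1 : (1 < p)%N := prime_gt1 pp.
have p31 : (1 < p ^ 3)%N by rewrite -[X in (X < _)%N](expn0 p) ltn_exp2l.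
have /fin_all_exists [ab hab] : forall i : 'I_(size s), exists ab : nat * nat,
    nth 1 s i = x ^+ ab.1 * y ^+ ab.2 /\ (usey || (ab.2 == 0%N)).
  by move=> i; apply: hs; exact: mem_nth.
pose g (i : 'I_(size s)) : V3 p := ((((ab i).1)%:R, ((ab i).2)%:R), 1%N%:R)%R.
pose e (j : 'I_3) : V3 p :=
  tnth [tuple ((1, 0), 0); ((0, if usey then 1 else 0), 0); ((0, 0), 1)]%R j.
pose t (j : 'I_3) : nat := tnth [tuple 1%N; (if usey then 1 else 0)%N; 3%N] j.
have he : forall j, e j *+ (p ^ t j) = 0.
  move=> j; rewrite V3_mulrn.
  case: j => [[|[|[|k]]] hj] //; rewrite /e /t (tnth_nth 0%N) /=.
  + by rewrite !mul0rn expn1 pchar_Zp.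
  + by case: (usey); rewrite /= !mul0rn ?expn1 ?mul0rn ?(pchar_Zp p1).
  + by rewrite !mul0rn pchar_Zp.
have hg : forall i, exists c : 'I_3 -> nat, g i = \sum_j e j *+ c j.
  move=> i; exists (tnth [tuple (ab i).1; (ab i).2; 1%N]).
  rewrite !big_ord_recr big_ord0 /= /e /g !V3_mulrn /= !(tnth_nth 0%N) /=.
  have [_ hu] := hab i.
  rewrite !mul0rn add0r !V3_add !add0r !addr0.
  by case: (usey) hu => /= [_|/eqP ->]; rewrite ?mulr0n ?addr0.
have hN : (\sum_j (p ^ t j).-1 < size s)%N.
  rewrite !big_ord_recr big_ord0 /= /t /= expn1.
  case: (usey) hlo => hlo; move: hlo; rewrite !(tnth_nth 0%N) /= ?expn1; move: (p ^ 3)%N p31 => q hq; lia.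
have [f f0 fs] := @olson 'F_p (V3 p) p 3 e t (size s) g (pchar_Fp pp) he hg hN.
rewrite V3_sum in fs.
have fs1 := congr1 (fun v : V3 p => val v.1.1) fs.
have fs2 := congr1 (fun v : V3 p => val v.1.2) fs.
have fs3 := congr1 (fun v : V3 p => val v.2) fs.
rewrite /= /g /= -!natr_sum !val_Zp_nat // in fs1 fs2 fs3.
have bm (R : Type) (idx : R) (op : Monoid.law idx) (F : T -> R) :
    \big[op/idx]_(w <- mask (fgraph f) s) F w =
    \big[op/idx]_(i < size s | f i) F (nth 1 s i).
  rewrite big_mask; apply: eq_big => [i|i _]; first by rewrite nth_fgraph_ord andbT.
  by rewrite (tnth_nth 1).
exists (fgraph f); split.
  rewrite -sum1_size bm.
  have hle : (\sum_(i < size s | f i) 1 <= size s)%N.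
    by rewrite sum1_card (leq_trans (max_card _)) // card_ord.
  have hpos : (0 < \sum_(i < size s | f i) 1)%N.
    have [i fi] : exists i, f i.
      apply/existsP; apply: contraR f0 => /existsPn h; apply/eqP/ffunP => i.
      by rewrite ffunE; apply/negbTE/h.
    by rewrite (bigD1 i).
  move: fs3 hle hpos; rewrite sum1_card; move: #|_| => c.
  move: (p ^ 3)%N p31 hhi => q hq hhi hm.
  have /dvdnP [r ->] : (q %| c)%N by rewrite /dvdn hm.
  by case: r => [|[|r]] //= hle hpos; nia.
rewrite bm (@prod_xy _ x y _ _ _ _ (fun i => (ab i).1) (fun i => (ab i).2)) //; last first.
  by move=> i; have [-> _] := hab i.
by rewrite -(expg_mod _ xp) -(expg_mod _ yp) fs1 fs2 !expg0 mulg1.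
Qed.

End PD.

Section PE.
Local Open Scope group_scope.

Lemma ord_p p (T : finGroupType) (x : T) : prime p -> x ^+ p = 1 -> x != 1 -> #[x] = p.
Proof.
move=> pp xp x1; have : (#[x] %| p)%N by rewrite order_dvdn xp.
case/primeP: pp => _ h /h /orP [|/eqP //]; by rewrite order_eq1 (negPf x1).
Qed.

Lemma p2_basis p (T : finGroupType) (K : {group T}) :
  prime p -> #|K| = (p ^ 2)%N -> (forall k, k \in K -> k ^+ p = 1) ->
  exists x y, [/\ x ^+ p = 1, y ^+ p = 1, commute x y &
    forall k, k \in K -> exists ab : nat * nat, k = x ^+ ab.1 * y ^+ ab.2].
Proof.
move=> pp oK eK.
have p1 := prime_gt1 pp.
have Kab := card_p2group_abelian pp oK.
have : K :!=: 1.
  apply/eqP => K1; move: oK; rewrite K1 cards1 => /esym/eqP.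
  by rewrite -(expn0 p) eqn_exp2l // .
case/trivgPn => x xK x1.
have ox : #[x] = p := ord_p pp (eK x xK) x1.
have : ~~ (K \subset <[x]>).
  apply/negP => /subset_leq_card; rewrite -orderE ox oK.
  by rewrite leqNgt -{1}(expn1 p) ltn_exp2l.
case/subsetPn => y yK yx.
have y1 : y != 1 by apply: contraNneq yx => ->; exact: group1.
have oy : #[y] = p := ord_p pp (eK y yK) y1.
have TI : <[x]> :&: <[y]> = 1.
  rewrite setIC; apply: prime_TIg; first by rewrite -orderE oy.
  by rewrite cycle_subG.
have sub : <[x]> * <[y]> \subset K by rewrite mul_subG // cycle_subG.
have eqK : <[x]> * <[y]> = K.
  apply/eqP; rewrite eqEcard sub (TI_cardMg TI) -!orderE ox oy oK /=.
  by rewrite mulnn.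
exists x, y; split; [exact: eK | exact: eK | |].
  exact: (centsP Kab x xK y yK).
move=> k; rewrite -eqK => /mulsgP [u v /cycleP [a ->] /cycleP [b ->] ->].
by exists (a, b).
Qed.

End PE.

Unset Implicit Arguments.
Import Pilot.Defs.
Local Open Scope group_scope.

Theorem lemma2p9 (p : nat) (gT : finGroupType) (G : {group gT}) :
  prime p -> odd p ->
  #|G| = (p ^ 3)%N -> ~~ abelian G -> exponent G = p ->
  forall W : seq gT, all (fun x => x \in G) W ->
  size W = (p ^ 3 + 3 * p - 3)%N ->
  [/\ (exists S, msub S W /\ size S = (p ^ 3)%N /\ has_central_product G S),
      ((p ^ 3 + p - 1 <= count (fun x => x \in 'Z(G)) W)%N ->
         exists S, msub S W /\ size S = (p ^ 3)%N /\ product_one S)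
    & (forall M : {group gT}, maximal M G ->
         (p ^ 3 + 2 * p - 2 <= count (fun x => x \in M) W)%N ->
         exists S, msub S W /\ size S = (p ^ 3)%N /\ product_one S)].
Proof.
move=> pp podd oG nab eG W WG sW.
have p2 := odd_prime_gt2 podd pp.
have p1 := prime_gt1 pp.
have pG : p.-group G by rewrite /pgroup oG pnatX pnat_id.
have expG : forall w, w \in G -> w ^+ p = 1 by move=> w wG; rewrite -eG expg_exponent.
have ext := p3group_extraspecial pG nab (eq_leq (etrans (congr1 _ oG) (pfactorK 3 pp))).
have oZ : #|'Z(G)| = p := card_center_extraspecial pG ext.
have hhi : (size W < 2 * p ^ 3)%N by rewrite sW; nia.
have fin : forall (P : pred gT) (m : bitseq),
    size (mask m (filter P W)) = (p ^ 3)%N ->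
    \prod_(w <- mask m (filter P W)) w = 1 ->
    exists S, msub S W /\ size S = (p ^ 3)%N /\ product_one S.
  move=> P m hs hp; exists (mask m (filter P W)); split; last split => //.
    exists (mask m (filter P W)); split => //.
    exact: subseq_trans (mask_subseq _ _) (filter_subseq _ _).
  split; first by apply/eqP; rewrite -size_eq0 hs expn_eq0 negb_and -lt0n prime_gt0.
  by exists (mask m (filter P W)).
have sizeF : forall P : pred gT, (size (filter P W) < 2 * p ^ 3)%N.
  by move=> P; rewrite size_filter (leq_ltn_trans (count_size _ _)).
split.
- have nZ : G \subset 'N('Z(G)) := normal_norm (center_normal G).
  have oQ : #|G / 'Z(G)| = (p ^ 2)%N.
    rewrite card_quotient // -divgS ?center_sub // oG oZ.
    by rewrite (expnSr p 2) mulnK // prime_gt0.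
  have eQ : forall k, k \in G / 'Z(G) -> k ^+ p = 1.
    move=> k /morphimP [w wN wG ->]; by rewrite -morphX // expG // morph1.
  have [x [y [xp yp cxy hK]]] := p2_basis pp oQ eQ.
  pose s := map (coset 'Z(G)) W.
  have h1 : forall w, w \in s -> exists ab : nat * nat,
       w = x ^+ ab.1 * y ^+ ab.2 /\ (true || (ab.2 == 0%N)).
    move=> w /mapP [w0 w0W ->].
    have [ab hab] := hK _ (mem_quotient _ (allP WG _ w0W)); by exists ab.
  have h2 : (p ^ 3 + (if true then 2 * p - 2 else p - 1) <= size s)%N.
    by rewrite size_map sW /=; lia.
  have h3 : (size s < 2 * p ^ 3)%N by rewrite size_map.
  have [m [hs hp]] := @app p _ x y true s pp cxy xp yp h1 h2 h3.
  exists (mask m W); split; first by exists (mask m W); split; rewrite ?mask_subseq.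
  split; first by rewrite -(size_map (coset 'Z(G))) map_mask.
  have sN : forall w, w \in mask m W -> w \in 'N('Z(G)).
    by move=> w /mem_mask /(allP WG) /(subsetP nZ).
  rewrite /has_central_product /Defs.seqprod big_seq; apply: coset_idr.
    by apply: group_prod => w /sN.
  rewrite (morph_prod _ _ sN) -big_seq -(big_map (coset 'Z(G)) xpredT id) map_mask.
  exact: hp.
- move=> hc.
  have /cyclicP [z Zz] : cyclic 'Z(G) by apply: prime_cyclic; rewrite oZ.
  have zG : z \in G by rewrite (subsetP (center_sub G)) // Zz cycle_id.
  have h1 : forall w, w \in filter (fun x => x \in 'Z(G)) W -> exists ab : nat * nat,
       w = z ^+ ab.1 * 1 ^+ ab.2 /\ (false || (ab.2 == 0%N)).
    move=> w; rewrite mem_filter Zz => /andP [/cycleP [a ->] _].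
    by exists (a, 0%N); rewrite /= expg0 mulg1.
  have h2 : (p ^ 3 + (if false then 2 * p - 2 else p - 1) <=
       size (filter (fun x => x \in 'Z(G)) W))%N.
    rewrite size_filter /= addnBA; [exact: hc|exact: prime_gt0 pp].
  have [m [hs hp]] := @app p gT z 1 false (filter (fun x => x \in 'Z(G)) W) pp
     (commute1 z) (expG z zG) (expg1n _ p) h1 h2 (sizeF _).
  exact: fin _ m hs hp.
- move=> M maxM hc.
  have sMG : M \subset G := proper_sub (maxgroupp maxM).
  have iM := p_maximal_index pG maxM.
  have oM : #|M| = (p ^ 2)%N.
    apply/eqP; rewrite -(eqn_pmul2r (prime_gt0 pp)) -{1}iM Lagrange // oG -expnSr.
    by [].
  have [x [y [xp yp cxy hK]]] := p2_basis pp oM (fun k kM => expG k (subsetP sMG k kM)).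
  have h1 : forall w, w \in filter (fun x => x \in M) W -> exists ab : nat * nat,
       w = x ^+ ab.1 * y ^+ ab.2 /\ (true || (ab.2 == 0%N)).
    move=> w; rewrite mem_filter => /andP [/hK [ab hab] _]; by exists ab.
  have h2 : (p ^ 3 + (if true then 2 * p - 2 else p - 1) <=
       size (filter (fun x => x \in M) W))%N.
    rewrite size_filter /= addnBA; [exact: hc|by rewrite leq_pmulr // prime_gt0].
  have [m [hs hp]] := @app p gT x y true (filter (fun x => x \in M) W) pp
     cxy xp yp h1 h2 (sizeF _).
  exact: fin _ m hs hp.
Qed.
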